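(* With $\bar{\sigma}_g^f,\bar{\sigma}_g^o,\bar{\sigma}_c^x\in(0,1)$, $\alpha\ge0$, $U_o\in\mathbb{R}^{n_x\times n_x}$ and \[ A_\delta=\begin{bmatrix}\bar{\sigma}_g^f & \alpha\\ \bar{\sigma}_g^o\bar{\sigma}_g^f & \alpha\bar{\sigma}_g^o+\tfrac14\bar{\sigma}_c^x\|U_o\|\end{bmatrix}, \] the matrix $A_\delta$ is Schur stable ($\rho(A_\delta)<1$) if \[ -1+\bar{\sigma}_g^f+\alpha\bar{\sigma}_g^o+\tfrac14\bar{\sigma}_c^x\|U_o\|<\tfrac14\bar{\sigma}_g^f\bar{\sigma}_c^x\|U_o\|<1. \]
   Context: $\|U_o\|$ is the induced 2-norm, $\rho$ the spectral radius. (In the paper these quantities arise from an LSTM network: $\bar{\sigma}_g^\star=\sigma_g(\|[W_\star u_{\max}\ U_\star\ b_\star]\|_\infty)$, $\bar{\sigma}_c^c=\tanh(\|[W_c u_{\max}\ U_c\ b_c]\|_\infty)$, $\bar{\sigma}_c^x=\tanh(\bar{\sigma}_g^i\bar{\sigma}_c^c/(1-\bar{\sigma}_g^f))$, $\alpha=\tfrac14\|U_f\|\frac{\bar{\sigma}_g^i\bar{\sigma}_c^c}{1-\bar{\sigma}_g^f}+\bar{\sigma}_g^i\|U_c\|+\tfrac14\|U_i\|\bar{\sigma}_c^c$.) *)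

(* Defs.v *)
From HB Require Import structures.
From mathcomp Require Import all_boot all_order all_algebra.
From mathcomp Require Import complex.
From mathcomp Require Import all_classical all_reals.
Set Implicit Arguments. Unset Strict Implicit. Unset Printing Implicit Defensive.
Import Order.TTheory GRing.Theory Num.Theory.
Local Open Scope ring_scope.
Local Open Scope classical_set_scope.

Definition norm2 (R : realType) (n : nat) (x : 'cV[R]_n) : R :=
  Num.sqrt (\sum_(i < n) x i 0 ^+ 2).

Definition induced_norm2 (R : realType) (n : nat) (U : 'M[R]_n) : R :=
  sup [set norm2 (U *m x) / norm2 x | x in [set x : 'cV[R]_n | x != 0]].

Definition spectral_radius (R : realType) (n : nat) (A : 'M[R]_n) : R :=
  sup [set ComplexField.Normc.normc l | l in
        [set l : R[i] | eigenvalue (map_mx (fun a : R => a%:C%C) A) l]].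

Definition A_delta (R : realType) (sgf sgo scx alpha nUo : R) : 'M[R]_2 :=
  \matrix_(i < 2, j < 2)
    if (i == 0 :> nat) then (if (j == 0 :> nat) then sgf else alpha)
    else (if (j == 0 :> nat) then sgo * sgf
          else alpha * sgo + 4^-1 * scx * nUo).

(* Main.v *)
Require Import Defs.
From HB Require Import structures.
From mathcomp Require Import all_boot all_order all_algebra.
From mathcomp Require Import complex.
From mathcomp Require Import all_classical all_reals.
From mathcomp Require Import ring lra.
Import Order.TTheory GRing.Theory Num.Theory.
Local Open Scope ring_scope.
Local Open Scope classical_set_scope.
Local Open Scope complex_scope.
Lemma key (R : realType) (T D : R) (z : R[i]) : 0 <= T -> 0 <= D -> D < 1 -> T < 1 + D ->
  z * z - T%:C * z + D%:C = 0 -> ComplexField.Normc.normc z < 1.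
Proof.
case: z => a b hT hD hD1 hTD.
rewrite /= => -[h1 h2].
rewrite -sqrtr1 ltr_sqrt ?ltr01 //.
have : b * (2 * a - T) = 0 by rewrite -h2; ring.
move/eqP; rewrite mulf_eq0 => /orP[/eqP hb|/eqP ha].
  subst b.
  have ha0 : 0 <= a by nra.
  have : a < 1 by nra.
  nra.
have eA : T = 2 * a by lra.
subst T. nra.
Qed.
Local Close Scope complex_scope.
Lemma induced_norm2_ge0 (R : realType) (n : nat) (U : 'M[R]_n) : 0 <= induced_norm2 U.
Proof.
rewrite /induced_norm2; set S := (X in sup X).
have [hs|hns] := pselect (has_sup S); last by rewrite sup_out.
case: (hs) => -[x Sx] _.
apply: le_trans (sup_upper_bound hs Sx).
case: Sx => y _ <-.
by apply: divr_ge0; apply: sqrtr_ge0.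
Qed.

Lemma eig_char (R : realType) (A : 'M[R]_2) (l : R[i]) :
  eigenvalue (map_mx (fun a : R => a%:C%C) A) l ->
  l * l - (A 0 0 + A 1 1)%:C%C * l + (A 0 0 * A 1 1 - A 0 1 * A 1 0)%:C%C = 0.
Proof.
move/eigenvalueP => [v hv vn0].
have e0 : (v *m map_mx (fun a : R => a%:C%C) A) 0 0 = (l *: v) 0 0 by rewrite hv.
have e1 : (v *m map_mx (fun a : R => a%:C%C) A) 0 1 = (l *: v) 0 1 by rewrite hv.
move: e0 e1; rewrite /= !mxE !big_ord_recr !big_ord0 /= !mxE /= !add0r.
have -> : widen_ord (leqnSn 1) ord_max = 0 :> 'I_2 by apply: val_inj.
have -> : ord_max = 1 :> 'I_2 by apply: val_inj.
set x := v 0 0; set y := v 0 1.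
rewrite ?rmorphD ?rmorphB ?rmorphM /=.
set f := (A 0 0)%:C%C; set g := (A 0 1)%:C%C; set h := (A 1 0)%:C%C; set d := (A 1 1)%:C%C.
move=> e0 e1.
rewrite ?rmorphN ?rmorphM.
set P := (X in X = 0).
have hx : P * x = 0.
  have -> : P * x = - h * (x * g + y * d - l * y) - (l - d) * (x * f + y * h - l * x) by rewrite /P; ring.
  by rewrite e0 e1 !subrr !mulr0 subrr.
have hy : P * y = 0.
  have -> : P * y = - g * (x * f + y * h - l * x) - (l - f) * (x * g + y * d - l * y) by rewrite /P; ring.
  by rewrite e0 e1 !subrr !mulr0 subrr.
apply/eqP; apply: contraR vn0 => Pn0.
apply/eqP/matrixP => i j; rewrite !ord1 mxE.
case: j => -[|[|//]] jl.
  have -> : Ordinal jl = 0 by apply: val_inj.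
  by apply/eqP; move: hx => /eqP; rewrite mulf_eq0 (negPf Pn0).
have -> : Ordinal jl = 1 by apply: val_inj.
by apply/eqP; move: hy => /eqP; rewrite mulf_eq0 (negPf Pn0).
Qed.

Lemma roots2 (R : realType) (T D : R[i]) : exists l1 l2 : R[i],
  [/\ l1 * l1 - T * l1 + D = 0, l2 * l2 - T * l2 + D = 0 &
  forall z, z * z - T * z + D = 0 -> z = l1 \/ z = l2].
Proof.
pose s := sqrtC (T * T - 4 * D).
have hs : s * s = T * T - 4 * D by rewrite -expr2 sqrtCK.
have fac : forall z, z * z - T * z + D = (z - (T + s) / 2) * (z - (T - s) / 2).
  move=> z; have -> : (z - (T + s) / 2) * (z - (T - s) / 2) = z * z - T * z + (T * T - s * s) / 4.
    by field; rewrite ?pnatr_eq0.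
  by rewrite hs; field; rewrite ?pnatr_eq0.
exists ((T + s) / 2), ((T - s) / 2); split.
- by rewrite fac subrr mul0r.
- by rewrite fac subrr mulr0.
move=> z; rewrite fac => /eqP; rewrite mulf_eq0 => /orP[|] /eqP/subr0_eq; by [left|right].
Qed.

Theorem proposition2 (R : realType) (nx : nat)
  (sgf sgo scx alpha : R) (Uo : 'M[R]_nx) :
  0 < sgf < 1 -> 0 < sgo < 1 -> 0 < scx < 1 -> 0 <= alpha ->
  -1 + sgf + alpha * sgo + 4^-1 * scx * induced_norm2 Uo
    < 4^-1 * sgf * scx * induced_norm2 Uo ->
  4^-1 * sgf * scx * induced_norm2 Uo < 1 ->
  spectral_radius (A_delta sgf sgo scx alpha (induced_norm2 Uo)) < 1.
Proof.
move=> /andP[f0 f1] /andP[o0 o1] /andP[x0 x1] a0 hT hD.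
have n0 := @induced_norm2_ge0 _ _ Uo.
move: hT hD n0; set n := induced_norm2 Uo => hT hD n0.
set A := A_delta sgf sgo scx alpha n.
set T := A 0 0 + A 1 1.
set D := A 0 0 * A 1 1 - A 0 1 * A 1 0.
have hTv : T = sgf + (alpha * sgo + 4^-1 * scx * n)
  by rewrite /T /A /A_delta !mxE /=.
have hDv : D = sgf * (alpha * sgo + 4^-1 * scx * n) - alpha * (sgo * sgf)
  by rewrite /D /A /A_delta !mxE /=.
have c0 : 0 <= 4^-1 * scx * n by apply: mulr_ge0 => //; apply: mulr_ge0; [lra | exact: ltW].
have as0 : 0 <= alpha * sgo by rewrite mulr_ge0 // ltW.
have T0 : 0 <= T by rewrite hTv; lra.
have D0 : 0 <= D by rewrite hDv; nra.
have D1 : D < 1 by rewrite hDv; lra.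
have TD : T < 1 + D by rewrite hTv hDv; lra.
have [l1 [l2 [r1 r2 hr]]] := @roots2 _ T%:C%C D%:C%C.
have k1 := @key _ _ _ _ T0 D0 D1 TD r1.
have k2 := @key _ _ _ _ T0 D0 D1 TD r2.
rewrite /spectral_radius -/A.
set S := (X in sup X).
have [ne|e] := pselect (S !=set0); last first.
  rewrite (_ : S = set0) ?sup0 ?ltr01 //.
  by apply/seteqP; split => x // Sx; apply: e; exists x.
apply: (le_lt_trans (ge_sup ne (x := Num.max (ComplexField.Normc.normc l1) (ComplexField.Normc.normc l2)) _)).
  move=> _ [l El <-]; have [->|->] := hr l (@eig_char _ _ _ El); by rewrite le_max lexx ?orbT.
by rewrite gt_max k1 k2.
Qed.
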